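(* The natural density of Carmichael polynomials in $\mathbb{F}_q[t]$ is zero, that is, $$\lim_{n\to\infty}\frac{C_q(1)+C_q(2)+\cdots+C_q(n)}{q^n}=0.$$
   Context: $\mathbb{F}_q$ is the finite field with $q$ elements. A finite ring $S$ is a Carmichael ring if $S$ is not a field and $a^{|S|}=a$ for every $a\in S$. A polynomial $f\in\mathbb{F}_q[t]$ is a Carmichael polynomial if $\mathbb{F}_q[t]/(f)$ is a Carmichael ring. $C_q(n)$ denotes the number of monic Carmichael polynomials in $\mathbb{F}_q[t]$ of degree $n$. *)

(* Defs.v *)
From HB Require Import structures.
From mathcomp Require Import all_boot all_order all_algebra.
Set Implicit Arguments. Unset Strict Implicit. Unset Printing Implicit Defensive.
Import GRing.Theory.
Local Open Scope ring_scope.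

Definition is_field_ring (S : finComNzRingType) : bool :=
  [forall a : S, (a != 0) ==> [exists b : S, a * b == 1]].

Definition carmichael_ring (S : finComNzRingType) : bool :=
  ~~ is_field_ring S && [forall a : S, a ^+ #|S| == a].

HB.instance Definition _ (F : finFieldType) (f : {poly F}) :=
  Finite.on {poly %/ f}.

(* f is a Carmichael polynomial if F[t]/(f) is a Carmichael ring.
   {poly %/ f} (mathcomp qpoly) is F[t]/(f) whenever f is monic of
   degree >= 1, which is the only case used below. *)
Definition carmichael_poly (F : finFieldType) (f : {poly F}) : bool :=
  carmichael_ring {poly %/ f}.

Definition Cq (F : finFieldType) (n : nat) : nat :=
  #|[set p : {poly_(n.+1) F} | [&& (val p) \is monic, size (val p) == n.+1
                                 & carmichael_poly (val p)]]|.

(* Main.v *)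
Require Import Defs.
From HB Require Import structures.
From mathcomp Require Import all_boot all_order all_algebra all_fingroup all_solvable all_field.
From mathcomp Require Import zify ring lra.
Import GRing.Theory Num.Theory.
Local Open Scope ring_scope.
Set Implicit Arguments. Unset Strict Implicit. Unset Printing Implicit Defensive.


Section Frob.
Variables (F L : finFieldType) (iota : {rmorphism F -> L}).
Local Notation q := #|F|.

Lemma q_pchar : {p | p \in [pchar F] & (p.-nat q)%N}.
Proof.
have [p pr pF] := finPcharP F; exists p => //.
have := abelem_pgroup (fin_ring_pchar_abelem pF).
by rewrite /pgroup cardsT.
Qed.

Lemma pcharL_nat : ([pchar L].-nat q)%N.
Proof.
have [p pF pq] := q_pchar.
have pL : p \in [pchar L] := rmorph_pchar iota pF.
by rewrite (eq_pnat _ (pcharf_eq pL)).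
Qed.

Lemma q_natr0 : (q%:R : L) = 0.
Proof.
have [p pF pq] := q_pchar.
have pL : p \in [pchar L] := rmorph_pchar iota pF.
have [e qe] := p_natP pq.
have e0 : (0 < e)%N.
  case: e qe => // qe; have := finNzRing_gt1 F; by rewrite qe.
by rewrite qe natrX (pcharf0 pL) expr0n; case: e e0 {qe}.
Qed.

Definition frob (x : L) := x ^+ q.

Lemma frobD x y : frob (x + y) = frob x + frob y.
Proof. exact: exprDn_pchar pcharL_nat. Qed.

Lemma frobM x y : frob (x * y) = frob x * frob y.
Proof. exact: exprMn. Qed.

Lemma frobB x y : frob (x - y) = frob x - frob y.
Proof. by apply/eqP; rewrite eq_sym subr_eq -frobD subrK. Qed.

Lemma frob_inj : injective frob.
Proof.
move=> x y e; apply/eqP; rewrite -subr_eq0; apply/eqP.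
have : frob (x - y) = 0 by rewrite frobB e subrr.
by move/eqP; rewrite expf_eq0 => /andP[_ /eqP].
Qed.

Lemma frob_iota c : frob (iota c) = iota c.
Proof. by rewrite /frob -rmorphXn expf_card. Qed.

Lemma frob0 : frob 0 = 0.
Proof. by rewrite /frob expr0n; case: #|F| (finNzRing_gt1 F). Qed.

Lemma frob_horner (f : {poly F}) x :
  (map_poly iota f).[frob x] = frob (map_poly iota f).[x].
Proof.
elim/poly_ind: f => [|f c IH]; first by rewrite map_poly0 !horner0 frob0.
rewrite rmorphD rmorphM /= map_polyX map_polyC /= !hornerMXaddC IH.
by rewrite frobD frobM frob_iota.
Qed.

Lemma root_frob (f : {poly F}) x :
  root (map_poly iota f) x -> root (map_poly iota f) (frob x).
Proof. by rewrite /root frob_horner => /eqP->; rewrite frob0. Qed.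

Lemma iter_frob k x : iter k frob x = x ^+ (q ^ k).
Proof.
elim: k => [|k IH]; first by rewrite expr1.
by rewrite iterS IH /frob -exprM expnSr.
Qed.

End Frob.


Section NatStuff.
Local Open Scope nat_scope.

Lemma iter_mul_id (T : Type) (f : T -> T) x d c :
  iter d f x = x -> iter (c * d) f x = x.
Proof.
move=> H; elim: c => [|c IH] //.
by rewrite mulSn iterD IH H.
Qed.

Lemma order_dvd (T : finType) (f : T -> T) (injf : injective f) x k :
  iter k f x = x -> fingraph.order f x %| k.
Proof.
move=> Hk; set d := fingraph.order f x.
have d0 : 0 < d := fingraph.order_gt0 f x.
have Hd : iter d f x = x := fingraph.iter_order injf x.
have Hr : iter (k %% d) f x = x.
  move: Hk; rewrite {1}(divn_eq k d) addnC iterD iter_mul_id //.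
rewrite /dvdn; apply/eqP; case E: (k %% d) => [//|r].
have lt : r.+1 < d by rewrite -E ltn_mod.
have := fingraph.findex_iter lt; rewrite -E Hr /fingraph.findex /fingraph.orbit.
by rewrite -(fingraph.orderSpred f x) /= eqxx.
Qed.

End NatStuff.


Lemma fixed_card (L : finFieldType) (k : nat) : (1 < k)%N ->
  (#|[pred a : L | a ^+ k == a]| <= k)%N.
Proof.
move=> k1; set p : {poly L} := 'X^k - 'X.
have sp : size p = k.+1.
  by rewrite /p size_polyDl size_polyXn // size_polyN size_polyX.
have nz : p != 0 by rewrite -size_poly_eq0 sp.
have rA : all (root p) (enum [pred a : L | a ^+ k == a]).
  apply/allP => a; rewrite mem_enum inE => /eqP e.
  by rewrite /root /p hornerD hornerN hornerXn hornerX e subrr.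
have := max_poly_roots nz rA (enum_uniq _).
by rewrite -cardE sp.
Qed.


Section Count.
Variables (F L : finFieldType) (iota : {rmorphism F -> L}).
Local Notation q := #|F|.
Variables (n : nat) (n_gt0 : (0 < n)%N).
Local Notation g := ('X^(q ^ n) - 'X : {poly F}).
Local Notation RL := (map_poly iota).
Variable rs : seq L.
Hypothesis split : RL g %= \prod_(z <- rs) ('X - z%:P).

Lemma RLg : RL g = 'X^(q ^ n) - 'X.
Proof. by rewrite rmorphB /= map_polyXn map_polyX. Qed.

Lemma uniq_rs : uniq rs.
Proof.
rewrite -separable_prod_XsubC -(eqp_separable split) RLg unlock.
rewrite derivB derivXn derivX -mulr_natr -polyC_natr natrX q_natr0 //.
rewrite expr0n eqn0Ngt n_gt0 /= polyC0 mulr0 sub0r.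
by apply/coprimepP => d _; rewrite dvdpNr dvdp1 size_poly_eq1.
Qed.


Lemma roots_card (f : {poly F}) :
  size f = n.+1 -> f %| g -> #|[pred a : L | root (RL f) a]| = n.
Proof.
move=> sf fg.
have d : RL f %| \prod_(z <- rs) ('X - z%:P) by rewrite -(eqp_dvdr _ split) dvdp_map.
have [m Hm] := dvdp_prod_XsubC d.
have E : [pred a : L | root (RL f) a] =i mask m rs.
  by move=> a; rewrite inE (eqp_root Hm) root_prod_XsubC.
rewrite (eq_card E) (card_uniqP _) ?mask_uniq ?uniq_rs //.
have := eqp_size Hm; rewrite size_prod_XsubC size_map_poly sf.
by case.
Qed.


Local Notation Fr := (@frob F L).

Lemma root_iter (f : {poly F}) a k :
  root (RL f) a -> root (RL f) (iter k Fr a).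
Proof. by move=> r; elim: k => [|k IH] //=; apply: root_frob. Qed.

Lemma root_orbit (f : {poly F}) a b :
  root (RL f) a -> b \in fingraph.orbit Fr a -> root (RL f) b.
Proof.
move=> r; rewrite -fingraph.fconnect_orbit => /iter_findex <-; exact: root_iter.
Qed.

Definition Mset := [set p : {poly_(n.+1) F} |
  [&& val p \is monic, size (val p) == n.+1 & val p %| g]].

Lemma root_bound (a : L) : (fingraph.order Fr a <= n)%N ->
  (#|[set f in Mset | root (RL (val f)) a]| <= q ^ (n - fingraph.order Fr a))%N.
Proof.
move=> dn; set d := fingraph.order Fr a.
pose phi (f : {poly_(n.+1) F}) := [ffun i : 'I_(n - d) => (val f)`_(d + i)].
have := @leq_card_in _ _ phi [set f in Mset | root (RL (val f)) a].
rewrite card_ffun card_ord; apply.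
move=> f1 f2; rewrite !inE => /andP[M1 r1] /andP[M2 r2] E.
case/and3P: M1 => m1 /eqP s1 _; case/and3P: M2 => m2 /eqP s2 _.
apply: val_inj; apply/eqP; rewrite -subr_eq0; apply/negPn/negP => nz.
set h := val f1 - val f2 in nz.
have sh : (size h <= d)%N.
  apply/leq_sizeP => j dj; rewrite coefB.
  have [jn|nj] := ltnP j n.
    have jlt : (j - d < n - d)%N by rewrite ltn_sub2r // (leq_ltn_trans dj).
    have := congr1 (fun f : {ffun _ -> _} => f (Ordinal jlt)) E; rewrite /phi !ffunE /=.
    by rewrite subnKC // => ->; rewrite subrr.
  have [nj'|jn'|<-] := ltngtP n j.
  - by rewrite !nth_default ?subrr // ?s1 ?s2.
  - by move: jn'; rewrite ltnNge nj.
  have e1 : (val f1)`_n = 1 by move/monicP: m1; rewrite lead_coefE s1.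
  have e2 : (val f2)`_n = 1 by move/monicP: m2; rewrite lead_coefE s2.
  by rewrite e1 e2 subrr.
have nzL : RL h != 0 by rewrite map_poly_eq0.
have rO : all (root (RL h)) (fingraph.orbit Fr a).
  apply/allP => b bO; rewrite /h rmorphB /root hornerD hornerN.
  by rewrite (eqP (root_orbit r1 bO)) (eqP (root_orbit r2 bO)) subrr.
have := max_poly_roots nzL rO (fingraph.orbit_uniq Fr a).
by rewrite fingraph.size_orbit size_map_poly ltnNge sh.
Qed.


Lemma ord_dvd (a : L) : root (RL g) a -> (fingraph.order Fr a %| n)%N.
Proof.
rewrite RLg /root hornerD hornerN hornerXn hornerX subr_eq0 => /eqP e.
apply: order_dvd; first exact: frob_inj iota.
by rewrite iter_frob.
Qed.

Lemma main_count :
  (n * #|Mset| <= \sum_(d < n.+1 | (d %| n)%N) q ^ n)%N.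
Proof.
pose c (f : {poly_(n.+1) F}) (a : L) := (f \in Mset) && root (RL (val f)) a.
have step1 : (n * #|Mset| <= \sum_f \sum_a (c f a : nat))%N.
  rewrite mulnC -sum_nat_const [X in (_ <= X)%N](bigID (fun f => f \in Mset)) /=.
  apply: leq_trans (leq_addr _ _); apply: leq_sum => f fM.
  rewrite -(roots_card (f := val f)); last 2 first.
  - by move: fM; rewrite inE => /and3P[_ /eqP -> _].
  - by move: fM; rewrite inE => /and3P[_ _ ->].
  rewrite -sum1_card big_mkcond /=; apply: leq_sum => a _.
  by rewrite /c fM inE; case: root.
apply: leq_trans step1 _; rewrite exchange_big /=.
have step2 a : (\sum_f (c f a : nat) <=
   \sum_(d < n.+1 | (d %| n)%N) (if a ^+ (q ^ d) == a then q ^ (n - d) else 0))%N.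
  have -> : (\sum_f (c f a : nat) = #|[set f in Mset | root (RL (val f)) a]|)%N.
    rewrite -sum1_card [in RHS]big_mkcond /=; apply: eq_bigr => f _; rewrite /c [in RHS]inE; by case: ((f \in Mset) && _).
  have [ga|nga] := boolP (root (RL g) a); last first.
    suff -> : #|[set f in Mset | root (RL (val f)) a]| = 0%N by [].
    apply/eqP; rewrite cards_eq0; apply/eqP/setP => f; rewrite !inE.
    apply/negP => /andP[fM rf]; apply: (negP nga); apply: root_dvdp rf.
    by move: fM; rewrite dvdp_map => /and3P[_ _ ->].
  have od := ord_dvd ga.
  have dn : (fingraph.order Fr a < n.+1)%N by rewrite ltnS dvdn_leq.
  rewrite (bigD1 (Ordinal dn)) //=.
  apply: leq_trans (leq_addr _ _).
  rewrite -iter_frob iter_order; last exact: frob_inj iota.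
  by rewrite eqxx root_bound // dvdn_leq.
apply: leq_trans; first by apply: leq_sum => a _; apply: step2.
rewrite exchange_big /=; apply: leq_sum => d dn.
rewrite -big_mkcond /= sum_nat_const.
have d0 : (0 < d)%N by apply: contraTT dn; rewrite -eqn0Ngt => /eqP ->; rewrite dvd0n -lt0n.
have q1 : (1 < q)%N := finNzRing_gt1 F.
apply: leq_trans (leq_mul (fixed_card L _) (leqnn _)) _.
  by rewrite (leq_trans q1) // -{1}(expn1 q) leq_pexp2l // ltnW.
by rewrite -expnD subnKC // -ltnS.
Qed.

End Count.


Lemma count_bound (F : finFieldType) (n : nat) : (0 < n)%N ->
  (n * #|Mset F n| <= \sum_(d < n.+1 | (d %| n)%N) #|F| ^ n)%N.
Proof.
move=> n0.
have gnz : ('X^(#|F| ^ n) - 'X : {poly F}) != 0.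
  rewrite -size_poly_eq0 size_polyDl ?size_polyXn // size_polyN size_polyX ltnS.
  by rewrite (leq_trans (finNzRing_gt1 F)) // -{1}(expn1 #|F|) leq_pexp2l // ltnW // finNzRing_gt1.
have [L0 [rs Hrs _]] := FinSplittingFieldFor gnz.
pose L := FinFieldExtType L0.
pose iota : {rmorphism F -> L} := in_alg L0.
apply: (@main_count F L iota n n0 rs).
exact: Hrs.
Qed.


Lemma carm_dvd (F : finFieldType) (n : nat) (f : {poly F}) : (0 < n)%N ->
  f \is monic -> size f = n.+1 -> carmichael_poly f ->
  f %| 'X^(#|F| ^ n) - 'X.
Proof.
move=> n0 mf sf /andP[_ /forallP H].
have s1 : (1 < size f)%N by rewrite sf ltnS.
have mk : mk_monic f = f by rewrite /mk_monic s1 mf.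
have := eqP (H (in_qpoly f 'X)).
rewrite card_monic_qpoly // sf /= -rmorphXn.
move/(congr1 val) => /=; rewrite mk => E.
rewrite Pdiv.Field.dvdpE; apply/Pdiv.Ring.rmodp_eq0P.
by rewrite Pdiv.RingMonic.rmodpB // E subrr.
Qed.

Section Divisors.
Local Open Scope nat_scope.

Lemma tau_bound (n m : nat) : 0 < n ->
  \sum_(d < n.+1 | d %| n) 1 <= m.+1 + (n %/ m.+1).+1.
Proof.
move=> n0; rewrite sum1_card -(cardID (fun d : 'I_n.+1 => d <= m.+1)).
apply: leq_add.
- have := @leq_card_in _ _ (fun d : 'I_n.+1 => (inord d.-1 : 'I_m.+1))
    [predI [pred d : 'I_n.+1 | d %| n] & [pred d : 'I_n.+1 | d <= m.+1]].
  rewrite card_ord; apply => d1 d2; rewrite !inE => /andP[h1 l1] /andP[h2 l2] /(congr1 val).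
  have p1 : 0 < d1 by apply: contraTT h1; rewrite -eqn0Ngt => /eqP->; rewrite dvd0n -lt0n.
  have p2 : 0 < d2 by apply: contraTT h2; rewrite -eqn0Ngt => /eqP->; rewrite dvd0n -lt0n.
  rewrite /= !inordK; last 2 first.
  + by rewrite ltnS -ltnS prednK.
  + by rewrite ltnS -ltnS prednK.
  by move=> e; apply: val_inj; rewrite /= -(prednK p1) -(prednK p2) e.
- have := @leq_card_in _ _ (fun d : 'I_n.+1 => (inord (n %/ d) : 'I_(n %/ m.+1).+1))
    [predD [pred d : 'I_n.+1 | d %| n] & [pred d : 'I_n.+1 | d <= m.+1]].
  rewrite card_ord; apply => d1 d2; rewrite !inE => /andP[l1 h1] /andP[l2 h2] /(congr1 val).
  rewrite -ltnNge in l1; rewrite -ltnNge in l2.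
  have p1 : 0 < d1 by apply: leq_trans l1.
  have p2 : 0 < d2 by apply: leq_trans l2.
  rewrite /= !inordK; last 2 first.
  + by rewrite ltnS leq_div2l // ltnW.
  + by rewrite ltnS leq_div2l // ltnW.
  move=> e; apply: val_inj => /=.
  have q1 : 0 < n %/ d1 by rewrite divn_gt0 // dvdn_leq.
  have q2 : 0 < n %/ d2 by rewrite -e.
  have E1 : n %/ (n %/ d1) = d1 by rewrite -{1}(divnK h1) mulKn.
  have E2 : n %/ (n %/ d2) = d2 by rewrite -{1}(divnK h2) mulKn.
  by rewrite -E1 e E2.
Qed.

End Divisors.

Section Final.
Variable F : finFieldType.
Local Notation q := #|F|.
Local Open Scope nat_scope.

Lemma q_gt1 : 1 < q. Proof. exact: finNzRing_gt1. Qed.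

Lemma Cq_le_M n : 0 < n -> Cq F n <= #|Mset F n|.
Proof.
move=> n0; apply: subset_leq_card; apply/subsetP => p; rewrite !inE.
case/and3P => m /eqP s c; rewrite m s eqxx /=.
exact: carm_dvd.
Qed.

Lemma Cq_triv n : Cq F n <= q ^ n.+1.
Proof.
rewrite /Cq; apply: leq_trans (max_card _) _.
by rewrite card_npoly.
Qed.

Lemma Cq_large n M : 0 < M -> M * M + M <= n -> M * Cq F n <= 2 * q ^ n.
Proof.
move=> M0 Mn.
have n0 : 0 < n by apply: leq_trans Mn; rewrite addn_gt0 M0 orbT.
have h1 : n * Cq F n <= (\sum_(d < n.+1 | d %| n) 1) * q ^ n.
  rewrite big_distrl /=; apply: leq_trans (leq_mul (leqnn n) (Cq_le_M n0)) _.
  by apply: leq_trans (count_bound F n0) _; apply: leq_sum => d _; rewrite mul1n.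
have h2 := tau_bound M.-1 n0; rewrite prednK // in h2.
have h3 : M * (n %/ M) <= n by rewrite mulnC leq_trunc_div.
rewrite -(leq_pmul2l n0) mulnCA.
apply: leq_trans (leq_mul (leqnn M) h1) _.
rewrite !mulnA; apply: leq_mul; last exact: leqnn.
apply: leq_trans (leq_mul (leqnn M) h2) _.
rewrite mulnDr mulnS; lia.
Qed.

Lemma geom_bound n : \sum_(k < n.+1) q ^ k <= 2 * q ^ n.
Proof.
elim: n => [|n IH]; first by rewrite big_ord1 expn0.
rewrite big_ord_recr /= expnS mul2n -addnn leq_add //.
by apply: leq_trans IH _; rewrite leq_mul2r q_gt1 orbT.
Qed.


Lemma final_nat M n : 0 < M -> (M * M + M) * (M * q ^ (M * M + M)) <= n ->
  M * \sum_(1 <= k < n.+1) Cq F k <= 5 * q ^ n.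
Proof.
move=> M0; set K := M * M + M => Xn.
have K1 : 1 <= K by rewrite addn_gt0 M0 orbT.
have Kn : K <= n.
  apply: leq_trans Xn; rewrite -{1}(muln1 K) leq_mul2l; apply/orP; right.
  by rewrite muln_gt0 M0 expn_gt0 (ltnW q_gt1).
have nq : n < q ^ n := ltn_expl n q_gt1.
rewrite big_distrr /= (@big_cat_nat _ _ _ K 1 n.+1) /=; last 2 first.
- exact: K1.
- by rewrite (leq_trans Kn).
rewrite (_ : 5 = 1 + 4) // mulnDl mul1n; apply: leq_add.
  apply: leq_trans (ltnW nq); apply: leq_trans Xn.
  apply: leq_trans (_ : \sum_(1 <= i < K) (M * q ^ K) <= _).
    rewrite big_nat_cond [X in _ <= X]big_nat_cond.
    apply: leq_sum => k /andP[/andP[_ kK] _]; rewrite leq_mul2l; apply/orP; right.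
    by apply: leq_trans (Cq_triv k) _; rewrite leq_pexp2l // ltnW // q_gt1.
  by rewrite sum_nat_const_nat leq_mul2r leq_subr orbT.
apply: leq_trans (_ : \sum_(K <= i < n.+1) 2 * q ^ i <= _).
  rewrite big_nat_cond [X in _ <= X]big_nat_cond.
  apply: leq_sum => k /andP[/andP[Kk _] _]; apply: Cq_large => //.
apply: leq_trans (_ : \sum_(0 <= i < n.+1) 2 * q ^ i <= _).
  by rewrite [X in _ <= X](@big_cat_nat _ _ _ K 0 n.+1) ?leq_addl // (leq_trans Kn).
rewrite -big_distrr /= big_mkord (_ : 4 = 2 * 2) // -mulnA leq_mul2l /=.
exact: geom_bound.
Qed.

End Final.

Theorem corollary4p7 (F : finFieldType) :
  forall eps : rat, 0 < eps ->
  exists N : nat, forall n : nat, (N <= n)%N ->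
    ((\sum_(1 <= k < n.+1) Cq F k)%N)%:R / ((#|F| ^ n)%N)%:R < eps.
Proof.
move=> eps e0.
set M := (Num.Def.archi_bound (5 / eps)).+1.
have hM : 5 / eps < M%:R.
  apply: Order.POrderTheory.lt_le_trans (archi_boundP _) _; first by rewrite divr_ge0 // Order.POrderTheory.ltW.
  by rewrite ler_nat.
exists ((M * M + M) * (M * #|F| ^ (M * M + M)))%N => n Xn.
have H := final_nat (ltn0Sn _) Xn.
set s := (\sum_(1 <= k < n.+1) Cq F k)%N in H *.
set Q := (#|F| ^ n)%N in H *.
have Q0 : (0 : rat) < Q%:R by rewrite ltr0n expn_gt0 (ltnW (q_gt1 F)).
have H' : (M%:R * s%:R <= 5 * Q%:R :> rat) by rewrite -!natrM ler_nat.
have hM' : 5 < M%:R * eps by rewrite -ltr_pdivrMr.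
have M0 : (0 : rat) < M%:R by rewrite ltr0n.
rewrite ltr_pdivrMr //.
nra.
Qed.
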